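(* Let $X,Y$ be metric spaces and equip $X\times Y$ with the maximum metric. Then (i) $\dim_{\mathrm P}(X\times Y)\ge \dim_{\mathrm P}X+\vec{\dim}_{\mathrm P}Y$; (ii) $\vec{\dim}_{\mathrm P}(X\times Y)\ge \vec{\dim}_{\mathrm P}X+\vec{\dim}_{\mathrm P}Y$; (iii) $\underline{\dim}_{\mathrm P}(X\times Y)\ge \underline{\dim}_{\mathrm P}X+\underline{\dim}_{\mathrm P}Y$.
   Context: For a subset $E$ of a metric space and $\delta>0$, $N_\delta(E)$ is the minimal cardinality of a cover of $E$ by sets of diameter at most $\delta$. The lower and upper box dimensions of a nonempty set $E$ are $\underline{\dim}_{\mathrm B}E=\liminf_{\delta\to0}\frac{\log N_\delta(E)}{|\log\delta|}$ and $\overline{\dim}_{\mathrm B}E=\limsup_{\delta\to0}\frac{\log N_\delta(E)}{|\log\delta|}$. The (upper) packing dimension is $\dim_{\mathrm P}E=\inf\{\sup_n\overline{\dim}_{\mathrm B}E_n: E\subseteq\bigcup_n E_n\}$, the lower packing dimension is $\underline{\dim}_{\mathrm P}E=\inf\{\sup_n\underline{\dim}_{\mathrm B}E_n: E\subseteq\bigcup_nE_n\}$ (infima over countable covers), and the directed lower packing dimension is $\vec{\dim}_{\mathrm P}E=\inf\{\sup_n\underline{\dim}_{\mathrm B}E_n: E_n\uparrow E\}$, where $E_n\uparrow E$ means that $(E_n)_{n\in\mathbb N}$ is an increasing sequence of sets with union $E$. *)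

(* Defs.v *)
From HB Require Import structures.
From mathcomp Require Import all_boot all_order all_algebra.
From mathcomp Require Import all_classical all_reals ereal exp.
Set Implicit Arguments. Unset Strict Implicit. Unset Printing Implicit Defensive.
Import Order.TTheory GRing.Theory Num.Theory.
Local Open Scope classical_set_scope.
Local Open Scope ring_scope.

Section Dims.
Variable R : realType.

Definition is_metric (T : Type) (d : T -> T -> R) : Prop :=
  (forall x y, 0 <= d x y) /\
  (forall x y, d x y = 0 <-> x = y) /\
  (forall x y, d x y = d y x) /\
  (forall x y z, d x z <= d x y + d y z).

Definition max_metric (T U : Type) (dT : T -> T -> R) (dU : U -> U -> R)
  : T * U -> T * U -> R :=
  fun p q => Num.max (dT p.1 q.1) (dU p.2 q.2).

Variables (T : Type) (d : T -> T -> R).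

Definition diam_le (F : set T) (delta : R) : Prop :=
  forall x y, F x -> F y -> d x y <= delta.

Definition covering_number (E : set T) (delta : R) : \bar R :=
  ereal_inf [set (n%:R)%:E | n in [set n : nat |
    exists F : nat -> set T,
      E `<=` [set x | exists2 i, (i < n)%N & F i x] /\
      forall i, (i < n)%N -> diam_le (F i) delta]].

Definition box_ratio (E : set T) (delta : R) : \bar R :=
  let N := covering_number E delta in
  if N == +oo%E then +oo%E else (ln (fine N) / `|ln delta|)%:E.

Definition lower_box_dim (E : set T) : \bar R :=
  if E == set0 then -oo%E else
  ereal_sup [set ereal_inf [set box_ratio E delta | delta in
                              [set delta : R | 0 < delta < eps]]
            | eps in [set eps : R | 0 < eps]].

Definition upper_box_dim (E : set T) : \bar R :=
  if E == set0 then -oo%E else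
  ereal_inf [set ereal_sup [set box_ratio E delta | delta in
                              [set delta : R | 0 < delta < eps]]
            | eps in [set eps : R | 0 < eps]].

(* countable covers, indexed by nat (finite covers: pad with empty sets) *)
Definition packing_dim (E : set T) : \bar R :=
  ereal_inf [set ereal_sup [set upper_box_dim (En n) | n in [set: nat]]
            | En in [set En : nat -> set T | E `<=` \bigcup_n En n]].

Definition lower_packing_dim (E : set T) : \bar R :=
  ereal_inf [set ereal_sup [set lower_box_dim (En n) | n in [set: nat]]
            | En in [set En : nat -> set T | E `<=` \bigcup_n En n]].

Definition directed_lower_packing_dim (E : set T) : \bar R :=
  ereal_inf [set ereal_sup [set lower_box_dim (En n) | n in [set: nat]]
            | En in [set En : nat -> set T |
                     (forall n, En n `<=` En n.+1) /\ \bigcup_n En n = E]].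

End Dims.

(* Main.v *)
Require Import Defs.
From HB Require Import structures.
From mathcomp Require Import all_boot all_order all_algebra.
From mathcomp Require Import all_classical all_reals ereal exp.
From mathcomp Require Import ring lra zify.
From mathcomp Require Import sequences.
Import Order.TTheory GRing.Theory Num.Theory.
Local Open Scope classical_set_scope.
Local Open Scope ring_scope.
Set Implicit Arguments. Unset Strict Implicit.



Section Count.
Variable R : realType.
Variables (T : Type) (d : T -> T -> R).

Definition cov (E : set T) (delta : R) (n : nat) : Prop :=
  exists F : nat -> set T,
      E `<=` [set x | exists2 i, (i < n)%N & F i x] /\
      forall i, (i < n)%N -> diam_le d (F i) delta.

Definition big (E : set T) delta (K : R) := forall n, cov E delta n -> K < n%:R.

Definition sep (E : set T) delta (p : nat) := exists f : nat -> T,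
  (forall i, (i < p)%N -> E (f i)) /\
  (forall i j, (i < p)%N -> (j < p)%N -> i <> j -> delta < d (f i) (f j)).

Lemma big_sub E E' delta K : E `<=` E' -> big E delta K -> big E' delta K.
Proof.
move=> EE' hb n [F [h1 h2]]; apply: hb; exists F; split => //.
by move=> x /EE' /h1.
Qed.

Lemma big_nonempty E delta K : 0 <= K -> big E delta K -> exists x, E x.
Proof.
move=> K0 hb; apply: boolp.contrapT => nE.
have : K < 0%:R.
  apply: hb; exists (fun _ => set0); split => // x Ex.
  by exfalso; apply: nE; exists x.
by rewrite ltNge K0.
Qed.

Lemma big_anti E delta K K' : K' <= K -> big E delta K -> big E delta K'.
Proof. by move=> KK hb n /hb; apply: le_lt_trans. Qed.

Lemma cov_union A B delta n m : cov A delta n -> cov B delta m ->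
  cov (A `|` B) delta (n + m).
Proof.
move=> [F [F1 F2]] [G [G1 G2]].
exists (fun i => if (i < n)%N then F i else G (i - n)%N); split.
  move=> x [/F1 [i ilt Fi]|/G1 [i ilt Gi]].
    by exists i; [rewrite ltn_addr|rewrite ilt].
  exists (n + i)%N; first by rewrite ltn_add2l.
  by rewrite ltnNge leq_addr /= addKn.
move=> i ilt; case: ifP => hi; first exact: F2.
apply: G2; rewrite ltn_subLR //; lia.
Qed.

Lemma big_union A B delta K : big (A `|` B) delta (K + K) ->
  big A delta K \/ big B delta K.
Proof.
move=> hb; apply: boolp.contrapT => /boolp.not_orP [nA nB].
move/boolp.existsNP: nA => [n /boolp.not_implyP [cA /negP]]; rewrite -leNgt => hn.
move/boolp.existsNP: nB => [m /boolp.not_implyP [cB /negP]]; rewrite -leNgt => hm.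
have := hb _ (cov_union cA cB); rewrite natrD; lra.
Qed.

Lemma sep_cov E delta p n : sep E delta p -> cov E delta n -> (p <= n)%N.
Proof.
move=> [f [f1 f2]] [F [F1 F2]].
have : forall i : 'I_p, exists j : 'I_n, F j (f i).
  move=> i; have [j jn Fj] := F1 _ (f1 _ (ltn_ord i)).
  by exists (Ordinal jn).
move=> /boolp.choice [g hg].
have ginj : injective g.
  move=> i i' gii'; apply: ord_inj; apply: boolp.contrapT => ne.
  have := f2 _ _ (ltn_ord i) (ltn_ord i') ne.
  have := hg i; rewrite gii' => hgi.
  have := F2 _ (ltn_ord (g i')) _ _ hgi (hg i').
  by move=> a; rewrite ltNge a.
by have := leq_card g ginj; rewrite !card_ord.
Qed.

Lemma sep_mono E delta p q : (q <= p)%N -> sep E delta p -> sep E delta q.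
Proof.
move=> qp [f [f1 f2]]; exists f; split.
  by move=> i iq; apply: f1; apply: leq_trans qp.
move=> i j iq jq; apply: f2; exact: leq_trans qp.
Qed.

Hypothesis dm : is_metric d.

Lemma big_sep E delta k : big E (2 * delta) k%:R -> sep E delta k.+1.
Proof.
case: dm => d0 [dxx [dsym dtri]].
elim: k => [|k IH] hb.
  have [x Ex] := big_nonempty (lexx 0) hb.
  by exists (fun _ => x); split => // i j; rewrite !ltnS !leqn0 => /eqP-> /eqP->.
have /IH [f [f1 f2]] : big E (2 * delta) k%:R.
  by apply: big_anti hb; rewrite ler_nat.
have [x [Ex hx]] : exists x, E x /\ forall i, (i < k.+1)%N -> delta < d (f i) x.
  apply: boolp.contrapT => hn.
  have : (k.+1%:R : R) < k.+1%:R.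
    apply: hb; exists (fun i => [set y | d (f i) y <= delta]); split.
      move=> y Ey; apply: boolp.contrapT => ny; apply: hn; exists y; split => //.
      move=> i ik; rewrite ltNge; apply/negP => dl; apply: ny; by exists i.
    move=> i _ y z /= hy hz; have := dtri y (f i) z; rewrite (dsym y (f i)); lra.
  by rewrite ltxx.
have ltk : forall i, (i < k.+2)%N -> i != k.+1 -> (i < k.+1)%N.
  by move=> i; rewrite ltnS leq_eqVlt => /orP[/eqP->|//]; rewrite eqxx.
exists (fun i => if i == k.+1 then x else f i); split.
  move=> i ilt; case: (eqVneq i k.+1) => [_|ik]; first exact: Ex.
  exact: f1 (ltk _ ilt ik).
move=> i j il jl ne.
case: (eqVneq i k.+1) => [ei|ik]; case: (eqVneq j k.+1) => [ej|jk].
- by exfalso; apply: ne; rewrite ei ej.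
- by rewrite dsym; apply: hx; apply: ltk.
- by apply: hx; apply: ltk.
- by apply: f2 => //; apply: ltk.
Qed.

End Count.



Section Prod.
Variable R : realType.
Variables (X Y : Type) (dX : X -> X -> R) (dY : Y -> Y -> R).

Lemma sep_prod (A : set X) (B : X -> set Y) (F : set (X * Y)) delta p q :
  (forall x y, A x -> B x y -> F (x, y)) -> (0 < p)%N -> (0 < q)%N ->
  sep dX A delta p -> (forall x, A x -> sep dY (B x) delta q) ->
  sep (max_metric dX dY) F delta (p * q).
Proof.
move=> hF p0 q0 [f [f1 f2]] hB.
have [y0 _] : exists y, B (f 0%N) y.
  by have [g [g1 _]] := hB _ (f1 _ p0); exists (g 0%N); apply: g1.
have : forall i, exists g : nat -> Y, (i < p)%N ->
   (forall j, (j < q)%N -> B (f i) (g j)) /\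
   (forall j j', (j < q)%N -> (j' < q)%N -> j <> j' -> delta < dY (g j) (g j')).
  move=> i; case: (ltnP i p) => ip.
    by have [g hg] := hB _ (f1 _ ip); exists g.
  by exists (fun=> y0).
move=> /boolp.choice [g hg].
have hdiv : forall l, (l < p * q)%N -> ((l %/ q)%N < p)%N.
  by move=> l lt; rewrite ltn_divLR.
exists (fun l => (f (l %/ q)%N, g (l %/ q)%N (l %% q)%N)); split.
  move=> l lt; have lq := hdiv _ lt; apply: hF; first exact: f1.
  by have [h1 _] := hg _ lq; apply: h1; rewrite ltn_pmod.
move=> l l' lt lt' ne; rewrite /max_metric /= lt_max; apply/orP.
case: (eqVneq (l %/ q)%N (l' %/ q)%N) => e.
  right; rewrite -e; have [_ h2] := hg _ (hdiv _ lt).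
  apply: h2; rewrite ?ltn_pmod //.
  move=> em; apply: ne; rewrite (divn_eq l q) (divn_eq l' q) e em //.
by left; apply: f2; [exact: hdiv|exact: hdiv|apply/eqP].
Qed.

End Prod.

Section Ratio.
Variable R : realType.
Variables (T : Type) (d : T -> T -> R).

Lemma cov_ge1 E delta n : (exists x, E x) -> cov d E delta n -> (1 <= n)%N.
Proof.
move=> [x Ex] [F [h1 _]]; have [i lt _] := h1 _ Ex; exact: leq_ltn_trans (leq0n i) lt.
Qed.

Lemma ratio_big E delta t : 0 < delta < 1 -> (exists x, E x) ->
  (t%:E < box_ratio d E delta)%E -> big d E delta (expR (t * - ln delta)).
Proof.
move=> /andP[d0 d1] nE; rewrite /box_ratio.
have lnd : ln delta < 0 by apply: ln_lt0; rewrite d0 d1.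
have Nle : forall n, cov d E delta n ->
    (covering_number d E delta <= n%:R%:E)%E.
  by move=> n cn; apply: ereal_inf_lbound; exists n.
have N1 : (1%:E <= covering_number d E delta)%E.
  apply: le_ereal_inf_tmp => _ [n cn <-]; rewrite lee_fin ler1n.
  exact: cov_ge1 cn.
move: Nle N1; case: (covering_number d E delta) => [r| |] /= Nle N1.
3: by move: N1; rewrite leeNy_eq.
2: by move=> _ n /Nle; rewrite leye_eq.
rewrite lee_fin in N1.
rewrite lte_fin ltr0_norm // ltr_pdivlMr; last by rewrite oppr_gt0.
move=> tl n /Nle; rewrite lee_fin => rn.
apply: lt_le_trans rn; rewrite -[r in _ < r]lnK; last by rewrite posrE; lra.
by rewrite ltr_expR.
Qed.

Lemma big_ratio E delta K : 0 < delta < 1 -> 0 < K -> big d E delta K ->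
  ((ln K / - ln delta)%:E <= box_ratio d E delta)%E.
Proof.
move=> /andP[d0 d1] K0 hb; rewrite /box_ratio.
have lnd : ln delta < 0 by apply: ln_lt0; rewrite d0 d1.
set N := covering_number d E delta.
have NK : (K%:E <= N)%E.
  apply: le_ereal_inf_tmp => _ [n cn <-]; rewrite lee_fin.
  exact/ltW/hb.
case: ifPn => [_|Noo]; first exact: leey.
case EN : N Noo NK => [r| |] //= _; rewrite lee_fin => Kr.
rewrite lee_fin ltr0_norm // ler_pM2r ?invr_gt0 ?oppr_gt0 //.
have r0 : 0 < r by lra.
by rewrite ler_ln ?posrE.
Qed.

End Ratio.



Section EHelp.
Variable R : realType.

Lemma le_fin_test (x y : \bar R) :
  (forall t : R, (t%:E < x)%E -> (t%:E <= y)%E) -> (x <= y)%E.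
Proof.
case: x => [a||]; case: y => [b||] h; rewrite ?leey ?leNye //.
- rewrite lee_fin leNgt; apply/negP => ba.
  have := h ((a + b) / 2); rewrite !lte_fin !lee_fin => h'.
  have : (a + b) / 2 <= b by apply: h'; lra.
  lra.
- have := h (a - 1); rewrite lte_fin => /(_ ltac:(lra)).
  by rewrite leeNy_eq.
- have := h (b + 1) (ltry _); rewrite lee_fin => H; exfalso; lra.
- by have := h 0 (ltry _); rewrite leeNy_eq.
Qed.

Lemma add_fin_test (a b c : \bar R) :
  (forall al be : R, (al%:E < a)%E -> (be%:E < b)%E -> ((al + be)%:E <= c)%E) ->
  (a + b <= c)%E.
Proof.
move=> h; apply: le_fin_test => t.
case: a h => [a||]; case: b => [b||] h //=.
- rewrite -EFinD lte_fin => ht.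
  have := h (a - (a + b - t) / 2) (b - (a + b - t) / 2).
  rewrite !lte_fin => /(_ ltac:(lra) ltac:(lra)).
  by have -> : a - (a + b - t) / 2 + (b - (a + b - t) / 2) = t by lra.
- move=> _; have := h (a - 1) (t - a + 1); rewrite lte_fin => /(_ ltac:(lra) (ltry _)).
  by have -> : a - 1 + (t - a + 1) = t by lra.
- move=> _; have := h (t - b + 1) (b - 1) (ltry _); rewrite lte_fin => /(_ ltac:(lra)).
  by have -> : t - b + 1 + (b - 1) = t by lra.
- move=> _; have := h t 0 (ltry _) (ltry _).
  by rewrite addr0.
Qed.

Lemma eta_test (t : R) (x : \bar R) :
  (forall e : R, 0 < e -> ((t - e)%:E <= x)%E) -> (t%:E <= x)%E.
Proof.
move=> h; apply/lee_subgt0Pr => e e0; rewrite -EFinB; exact: h.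
Qed.

End EHelp.

Section BoxHelp.
Variable R : realType.
Variables (T : Type) (d : T -> T -> R).

Lemma lower_box_gt E (t : R) : (t%:E < lower_box_dim d E)%E ->
  (exists x, E x) /\ exists d0, 0 < d0 /\
    forall delta, 0 < delta < d0 -> (t%:E < box_ratio d E delta)%E.
Proof.
rewrite /lower_box_dim; case: ifPn => [_|nE]; first by rewrite ltNge leNye.
move=> /ereal_sup_gt [_ [eps eps0 <-] ht]; split; first exact/set0P.
exists eps; split => // delta hd; apply: (lt_le_trans ht).
by apply: ereal_inf_lbound; exists delta.
Qed.

Lemma lower_box_ge E (t : R) d0 : (exists x, E x) -> 0 < d0 ->
  (forall delta, 0 < delta < d0 -> (t%:E <= box_ratio d E delta)%E) ->
  (t%:E <= lower_box_dim d E)%E.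
Proof.
move=> nE d00 h; rewrite /lower_box_dim ifN; last exact/set0P.
apply: le_trans (ereal_sup_ubound _); last by exists d0.
by apply: le_ereal_inf_tmp => _ [delta hd <-]; apply: h.
Qed.

Lemma upper_box_gt E (t : R) : (t%:E < upper_box_dim d E)%E ->
  (exists x, E x) /\ forall eps, 0 < eps ->
    exists delta, 0 < delta < eps /\ (t%:E < box_ratio d E delta)%E.
Proof.
rewrite /upper_box_dim; case: ifPn => [_|nE]; first by rewrite ltNge leNye.
move=> ht; split; first exact/set0P.
move=> eps eps0.
have : (t%:E < ereal_sup [set box_ratio d E delta | delta in
            [set delta : R | (0 < delta < eps)%R]])%E.
  by apply: (lt_le_trans ht); apply: ereal_inf_lbound; exists eps.
by move=> /ereal_sup_gt [_ [delta hd <-] h]; exists delta.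
Qed.

Lemma upper_box_ge E (t : R) : (exists x, E x) ->
  (forall eps, 0 < eps ->
    exists delta, 0 < delta < eps /\ (t%:E <= box_ratio d E delta)%E) ->
  (t%:E <= upper_box_dim d E)%E.
Proof.
move=> nE h; rewrite /upper_box_dim ifN; last exact/set0P.
apply: le_ereal_inf_tmp => _ [eps eps0 <-].
have [delta [hd hr]] := h eps eps0.
by apply: le_trans hr _; apply: ereal_sup_ubound; exists delta.
Qed.

End BoxHelp.



Section Core.
Variable R : realType.
Variables (X Y : Type) (dX : X -> X -> R) (dY : Y -> Y -> R).
Hypotheses (mX : is_metric dX) (mY : is_metric dY).

Lemma slack (s e : R) : 0 < e -> exists d1, 0 < d1 /\ d1 <= 1/2 /\
  forall delta, 0 < delta < d1 ->
    s - e <= (s * - ln (2 * delta)) / - ln delta.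
Proof.
move=> e0; exists (Num.min (1/2) (expR (- (`|s| * ln 2) / e))); split.
  by rewrite lt_min expR_gt0 andbT; lra.
split; first by rewrite ge_min lexx.
move=> delta /andP[d0]; rewrite lt_min => /andP[dh dex].
have lnd : ln delta < 0 by apply: ln_lt0; rewrite d0 /=; lra.
have ln2 : 0 < ln (2 : R) by apply: ln_gt0; lra.
have h1 : ln delta < - (`|s| * ln 2) / e.
  by rewrite -[X in _ < X]expRK ltr_ln ?posrE ?expR_gt0.
have h2 : `|s| * ln 2 < e * - ln delta.
  move: h1; rewrite ltr_pdivlMr // => h1; lra.
have h3 : s * ln 2 <= `|s| * ln 2 by rewrite ler_pM2r // ler_norm.
rewrite lnM ?posrE //.
rewrite ler_pdivlMr; last lra.
lra.
Qed.

Let dXY := max_metric dX dY.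

Lemma core_box (A : set X) (B : X -> set Y) (F : set (X * Y))
  (hF : forall x y, A x -> B x y -> F (x, y)) (al be delta : R) :
  0 < delta -> 2 * delta < 1 ->
  big dX A (2 * delta) (expR (al * - ln (2 * delta))) ->
  (forall x, A x -> big dY (B x) (2 * delta) (expR (be * - ln (2 * delta)))) ->
  ((((al + be) * - ln (2 * delta)) / - ln delta)%:E <= box_ratio dXY F delta)%E.
Proof.
move=> d0 d1 hA hB.
set KA := expR (al * - ln (2 * delta)).
set KB := expR (be * - ln (2 * delta)).
have KA0 : 0 < KA by apply: expR_gt0.
have KB0 : 0 < KB by apply: expR_gt0.
have sA : sep dX A delta (Num.truncn KA).+1.
  apply: big_sep => //; apply: big_anti hA; rewrite truncn_le; exact: ltW.
have sB : forall x, A x -> sep dY (B x) delta (Num.truncn KB).+1.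
  move=> x Ax; apply: big_sep => //; apply: big_anti (hB x Ax).
  rewrite truncn_le; exact: ltW.
have sF := sep_prod hF (ltn0Sn _) (ltn0Sn _) sA sB.
have bF : big dXY F delta (KA * KB).
  move=> n cn; have := sep_cov sF cn; rewrite -(ler_nat R) natrM => hn.
  apply: lt_le_trans hn.
  have := truncnS_gt KA; have := truncnS_gt KB.
  set a := _%:R; set b := _%:R => hb ha.
  by apply: ltr_pM => //; exact: ltW.
have := big_ratio (E := F) (d := dXY) (delta := delta) _ _ bF.
rewrite d0 /= mulr_gt0 // => /(_ ltac:(lra) isT).
by rewrite lnM ?posrE // !expRK -mulrDl.
Qed.


Lemma core_lower (A : set X) (B : X -> set Y) (F : set (X * Y))
  (hF : forall x y, A x -> B x y -> F (x, y)) (al be d0 : R) : 0 < d0 ->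
  (al%:E < lower_box_dim dX A)%E ->
  (forall x, A x -> forall delta, 0 < delta < d0 ->
     big dY (B x) delta (expR (be * - ln delta))) ->
  ((al + be)%:E <= lower_box_dim dXY F)%E.
Proof.
move=> d00 /lower_box_gt [[x0 Ax0] [da [da0 hA]]] hB.
have [y0 By0] : exists y, B x0 y.
  apply: (big_nonempty (K := expR (be * - ln (d0 / 2)))).
    exact/ltW/expR_gt0.
  apply: hB => //; apply/andP; split; lra.
apply: eta_test => e e0.
have [d1 [d10 [d1h hs]]] := slack (al + be) e0.
apply: (lower_box_ge (d0 := Num.min d1 (Num.min (da / 2) (d0 / 2)))).
- by exists (x0, y0); apply: hF.
- by rewrite !lt_min d10 /=; apply/andP; split; lra.
move=> delta /andP[dp]; rewrite !lt_min => /and3P[dd1 dda dd0].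
apply: le_trans (core_box hF _ _ _ _) => //.
- by rewrite lee_fin; apply: hs; rewrite dp dd1.
- lra.
- apply: ratio_big; first by apply/andP; split; lra.
    by exists x0.
  by apply: hA; apply/andP; split; lra.
- by move=> x Ax; apply: hB => //; apply/andP; split; lra.
Qed.

Lemma core_upper (A : set X) (B : X -> set Y) (F : set (X * Y))
  (hF : forall x y, A x -> B x y -> F (x, y)) (al be d0 : R) : 0 < d0 ->
  (al%:E < upper_box_dim dX A)%E ->
  (forall x, A x -> forall delta, 0 < delta < d0 ->
     big dY (B x) delta (expR (be * - ln delta))) ->
  ((al + be)%:E <= upper_box_dim dXY F)%E.
Proof.
move=> d00 /upper_box_gt [[x0 Ax0] hA] hB.
have [y0 By0] : exists y, B x0 y.
  apply: (big_nonempty (K := expR (be * - ln (d0 / 2)))).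
    exact/ltW/expR_gt0.
  apply: hB => //; apply/andP; split; lra.
apply: eta_test => e e0.
have [d1 [d10 [d1h hs]]] := slack (al + be) e0.
apply: upper_box_ge; first by exists (x0, y0); apply: hF.
move=> eps eps0.
have [da [/andP[da0]]] := hA (Num.min (2 * eps) (Num.min (2 * d1) d0))
   ltac:(rewrite !lt_min; apply/and3P; split; lra).
rewrite !lt_min => /and3P[dae dad1 dad0] hr.
exists (da / 2); split; first by apply/andP; split; lra.
apply: le_trans (core_box hF _ _ _ _) => //.
- rewrite lee_fin; apply: hs; apply/andP; split; lra.
- lra.
- lra.
- have -> : 2 * (da / 2) = da by lra.
  apply: ratio_big; first by apply/andP; split; lra.
    by exists x0.
  exact: hr.
- by move=> x Ax; apply: hB => //; apply/andP; split; lra.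
Qed.

End Core.



Section Union.
Variable R : realType.
Variables (T : Type) (d : T -> T -> R).

Lemma upper_union (A B : set T) :
  (upper_box_dim d (A `|` B) <=
   Order.max (upper_box_dim d A) (upper_box_dim d B))%E.
Proof.
apply: le_fin_test => t /upper_box_gt [nAB h].
apply: eta_test => e e0.
have ln2 : 0 < ln (2 : R) by apply: ln_gt0; lra.
set c := expR (- ln 2 / e).
have c0 : 0 < c by apply: expR_gt0.
pose P (C : set T) delta := [/\ 0 < delta, delta < 1, delta < c &
  big d C delta (expR (t * - ln delta - ln 2))].
have key : forall C : set T, (forall eps, 0 < eps -> exists delta, delta < eps /\ P C delta) ->
    ((t - e)%:E <= upper_box_dim d C)%E.
  move=> C hC; apply: upper_box_ge.
    have [delta [_ [_ _ _ hb]]] := hC 1 ltr01.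
    by apply: big_nonempty hb; exact/ltW/expR_gt0.
  move=> eps eps0; have [delta [de [dp d1 dc hb]]] := hC eps eps0.
  exists delta; split; first by rewrite dp de.
  apply: le_trans (big_ratio _ _ hb); last exact: expR_gt0.
    2: by rewrite dp d1.
  have lnd : ln delta < 0 by apply: ln_lt0; rewrite dp d1.
  have h1 : ln delta < - ln 2 / e.
    by rewrite -[X in _ < X]expRK ltr_ln ?posrE ?expR_gt0.
  have h2 : ln 2 < e * - ln delta.
    move: h1; rewrite ltr_pdivlMr // => h1; lra.
  rewrite lee_fin expRK ler_pdivlMr; last lra.
  lra.
have [HA|HB] : (forall eps, 0 < eps -> exists delta, delta < eps /\ P A delta) \/
               (forall eps, 0 < eps -> exists delta, delta < eps /\ P B delta).
- apply: boolp.contrapT => /boolp.not_orP [].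
  move=> /boolp.existsNP [eA /boolp.not_implyP [eA0 /boolp.forallNP nA]].
  move=> /boolp.existsNP [eB /boolp.not_implyP [eB0 /boolp.forallNP nB]].
  have [delta [/andP[dp]]] := h (Num.min (Num.min eA eB) (Num.min 1 c))
    ltac:(by rewrite !lt_min eA0 eB0 ltr01 c0).
  rewrite !lt_min => /andP[/andP[dA dB] /andP[d1 dc]] hr.
  have hd : 0 < delta < 1 by rewrite dp d1.
  have := ratio_big hd nAB hr.
  have -> : expR (t * - ln delta) =
            expR (t * - ln delta - ln 2) + expR (t * - ln delta - ln 2).
    by rewrite expRD expRN lnK ?posrE //; field.
  move=> /big_union [hb|hb].
  + by apply: (nA delta); split => //.
  + by apply: (nB delta); split => //.
- by rewrite le_max (key A HA).
- by rewrite le_max (key B HB) orbT.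
Qed.

Lemma upper_finite_union (E : nat -> set T) N :
  (upper_box_dim d (fun p => exists2 n, (n <= N)%N & E n p) <=
   ereal_sup [set upper_box_dim d (E n) | n in [set: nat]])%E.
Proof.
elim: N => [|N IH].
  have -> : (fun p => exists2 n, (n <= 0)%N & E n p) = E 0%N.
    apply/seteqP; split => p /=; first by move=> [n]; rewrite leqn0 => /eqP->.
    by move=> Ep; exists 0%N.
  by apply: ereal_sup_ubound; exists 0%N.
have -> : (fun p => exists2 n, (n <= N.+1)%N & E n p) =
    (fun p => exists2 n, (n <= N)%N & E n p) `|` E N.+1.
  apply/seteqP; split => p /=.
    move=> [n]; rewrite leq_eqVlt => /orP[/eqP->|]; first by right.
    by rewrite ltnS => nN En; left; exists n.
  by move=> [[n nN En]|EN]; [exists n => //; apply: leqW|exists N.+1].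
apply: le_trans (upper_union _ _) _.
rewrite ge_max IH /=; apply: ereal_sup_ubound; by exists N.+1.
Qed.

End Union.



Section Pack.
Variable R : realType.
Variables (T : Type) (d : T -> T -> R).

Lemma pk_upper (t : R) (En : nat -> set T) :
  (t%:E < packing_dim d setT)%E -> (forall p, exists n, En n p) ->
  exists n, (t%:E < upper_box_dim d (En n))%E.
Proof.
move=> ht hc.
have : (t%:E < ereal_sup [set upper_box_dim d (En n) | n in [set: nat]])%E.
  apply: lt_le_trans ht _; apply: ereal_inf_lbound; exists En => //.
  by move=> p _; have [n Enp] := hc p; exists n.
by move=> /ereal_sup_gt [_ [n _ <-] h]; exists n.
Qed.

Lemma pk_lower (t : R) (En : nat -> set T) :
  (t%:E < lower_packing_dim d setT)%E -> (forall p, exists n, En n p) ->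
  exists n, (t%:E < lower_box_dim d (En n))%E.
Proof.
move=> ht hc.
have : (t%:E < ereal_sup [set lower_box_dim d (En n) | n in [set: nat]])%E.
  apply: lt_le_trans ht _; apply: ereal_inf_lbound; exists En => //.
  by move=> p _; have [n Enp] := hc p; exists n.
by move=> /ereal_sup_gt [_ [n _ <-] h]; exists n.
Qed.

Lemma pk_dir (t : R) (En : nat -> set T) :
  (t%:E < directed_lower_packing_dim d setT)%E ->
  (forall n, En n `<=` En n.+1) -> (forall p, exists n, En n p) ->
  exists n, (t%:E < lower_box_dim d (En n))%E.
Proof.
move=> ht hinc hc.
have : (t%:E < ereal_sup [set lower_box_dim d (En n) | n in [set: nat]])%E.
  apply: lt_le_trans ht _; apply: ereal_inf_lbound; exists En => //.
  split => //; apply/seteqP; split => p //= _.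
  by have [n Enp] := hc p; exists n.
by move=> /ereal_sup_gt [_ [n _ <-] h]; exists n.
Qed.

Lemma chain_mono (En : nat -> set T) : (forall n, En n `<=` En n.+1) ->
  forall n m, (n <= m)%N -> En n `<=` En m.
Proof.
move=> hinc n; elim=> [|m IH]; first by rewrite leqn0 => /eqP->.
rewrite leq_eqVlt => /orP[/eqP->//|]; rewrite ltnS => /IH h p /h; exact: hinc.
Qed.

Lemma inv_le (k m : nat) : (k <= m)%N -> (m.+1%:R : R)^-1 <= (k.+1%:R)^-1.
Proof.
by move=> km; rewrite lef_pV2 ?posrE ?ltr0Sn // ler_nat ltnS.
Qed.

Lemma inv_le1 (k : nat) : (k.+1%:R : R)^-1 <= 1.
Proof. by rewrite invr_le1 ?unitfE ?pnatr_eq0 // ?ltr0Sn // ler1n. Qed.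

Lemma lower_to_big (C : set T) (t : R) : (t%:E < lower_box_dim d C)%E ->
  exists k : nat, forall delta, 0 < delta < (k.+1%:R)^-1 ->
    big d C delta (expR (t * - ln delta)).
Proof.
move=> /lower_box_gt [nC [d0 [d00 h]]].
exists (Num.truncn (d0^-1)) => delta /andP[dp dk].
have kd : (((Num.truncn (d0^-1)).+1)%:R : R)^-1 < d0.
  rewrite invf_plt ?posrE ?ltr0Sn //; exact: truncnS_gt.
apply: ratio_big nC (h _ _).
  by rewrite dp /=; apply: lt_le_trans dk (inv_le1 _).
by rewrite dp /=; apply: lt_trans kd.
Qed.

End Pack.

Section Fib.
Variable R : realType.
Variables (X Y : Type) (dX : X -> X -> R) (dY : Y -> Y -> R).

Definition fiber (E : nat -> set (X * Y)) n x : set Y := [set y | E n (x, y)].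

Lemma dir_fiber (E : nat -> set (X * Y)) (be : R) :
  (forall n, E n `<=` E n.+1) -> (forall p, exists n, E n p) ->
  (be%:E < directed_lower_packing_dim dY setT)%E ->
  exists g : X -> nat, forall x m, (g x <= m)%N ->
    forall delta, 0 < delta < (m.+1%:R)^-1 ->
      big dY (fiber E m x) delta (expR (be * - ln delta)).
Proof.
move=> hinc hc hbe.
have : forall x, exists m0 : nat, forall m, (m0 <= m)%N ->
    forall delta, 0 < delta < (m.+1%:R)^-1 ->
      big dY (fiber E m x) delta (expR (be * - ln delta)).
  move=> x.
  have [n hn] := pk_dir hbe (En := fiber E ^~ x)
     (fun n y => @hinc n (x, y)) (fun y => hc (x, y)).
  have [k hk] := lower_to_big hn.
  exists (maxn n k) => m hm delta /andP[dp dm].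
  have hd : 0 < delta < (k.+1%:R)^-1.
    rewrite dp /=; apply: lt_le_trans dm _; apply: inv_le; lia.
  have hsub : fiber E n x `<=` fiber E m x.
    move=> y; rewrite /fiber /=; apply: (chain_mono hinc); lia.
  move=> n' [F [h1 h2]]; apply: (hk delta hd); exists F; split => //.
  by move=> y /hsub /h1.
by move=> /boolp.choice [g hg]; exists g.
Qed.

Lemma pair_fiber (E : nat -> set (X * Y)) (be : R) :
  (forall p, exists n, E n p) ->
  (be%:E < lower_packing_dim dY setT)%E ->
  exists g : X -> nat * nat, forall x delta, 0 < delta < ((g x).2.+1%:R)^-1 ->
      big dY (fiber E (g x).1 x) delta (expR (be * - ln delta)).
Proof.
move=> hc hbe.
have : forall x, exists nk : nat * nat, forall delta, 0 < delta < (nk.2.+1%:R)^-1 ->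
      big dY (fiber E nk.1 x) delta (expR (be * - ln delta)).
  move=> x.
  have [n hn] := pk_lower hbe (En := fiber E ^~ x) (fun y => hc (x, y)).
  have [k hk] := lower_to_big hn.
  by exists (n, k).
by move=> /boolp.choice [g hg]; exists g.
Qed.

End Fib.



Lemma partI (R : realType) (X Y : Type) (dX : X -> X -> R) (dY : Y -> Y -> R) :
  is_metric dX -> is_metric dY ->
  (packing_dim dX setT + directed_lower_packing_dim dY setT
         <= packing_dim (max_metric dX dY) setT)%E.
Proof.
move=> mX mY; apply: add_fin_test => al be hal hbe.
apply: le_ereal_inf_tmp => _ [E hE <-].
pose G N := fun p => exists2 n, (n <= N)%N & E n p.
have Ginc : forall N, G N `<=` G N.+1.
  by move=> N p [n nN Enp]; exists n => //; apply: leqW.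
have Gc : forall p, exists N, G N p.
  by move=> p; have [n _ Enp] := hE p I; exists n; exists n.
have [g hg] := dir_fiber (X := X) Ginc Gc hbe.
have [m hm] := pk_upper (En := fun m => [set x | (g x <= m)%N]) hal
  (fun x => ex_intro _ (g x) (leqnn _)).
have m0 : 0 < (m.+1%:R : R)^-1 by rewrite invr_gt0 ltr0Sn.
have := core_upper mX mY (A := [set x | (g x <= m)%N]) (B := fiber G m) (F := G m)
  (fun x y _ h => h) m0 hm (fun x gx => hg x m gx).
move=> h; apply: le_trans h _; exact: upper_finite_union.
Qed.

Lemma partII (R : realType) (X Y : Type) (dX : X -> X -> R) (dY : Y -> Y -> R) :
  is_metric dX -> is_metric dY ->
  (directed_lower_packing_dim dX setT + directed_lower_packing_dim dY setT
         <= directed_lower_packing_dim (max_metric dX dY) setT)%E.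
Proof.
move=> mX mY; apply: add_fin_test => al be hal hbe.
apply: le_ereal_inf_tmp => _ [E [Einc Eun] <-].
have Ec : forall p, exists n, E n p.
  move=> p; have : (\bigcup_n E n) p by rewrite Eun.
  by move=> [n _ Enp]; exists n.
have [g hg] := dir_fiber (X := X) Einc Ec hbe.
have [m hm] := pk_dir (En := fun m => [set x | (g x <= m)%N]) hal
  (fun m x gx => leqW gx) (fun x => ex_intro _ (g x) (leqnn _)).
have m0 : 0 < (m.+1%:R : R)^-1 by rewrite invr_gt0 ltr0Sn.
have := core_lower mX mY (A := [set x | (g x <= m)%N]) (B := fiber E m) (F := E m)
  (fun x y _ h => h) m0 hm (fun x gx => hg x m gx).
by move=> h; apply: le_trans h _; apply: ereal_sup_ubound; exists m.
Qed.

Lemma partIII (R : realType) (X Y : Type) (dX : X -> X -> R) (dY : Y -> Y -> R) :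
  is_metric dX -> is_metric dY ->
  (lower_packing_dim dX setT + lower_packing_dim dY setT
         <= lower_packing_dim (max_metric dX dY) setT)%E.
Proof.
move=> mX mY; apply: add_fin_test => al be hal hbe.
apply: le_ereal_inf_tmp => _ [E hE <-].
have Ec : forall p, exists n, E n p.
  by move=> p; have [n _ Enp] := hE p I; exists n.
have [g hg] := pair_fiber (X := X) Ec hbe.
have [j hj] := pk_lower (En := fun j => [set x | pickle (g x) = j]) hal
  (fun x => ex_intro _ (pickle (g x)) erefl).
have [[x0 hx0] _] := lower_box_gt hj.
have m0 : 0 < (((g x0).2).+1%:R : R)^-1 by rewrite invr_gt0 ltr0Sn.
have hB : forall x, [set x | pickle (g x) = j] x -> forall delta,
    0 < delta < (((g x0).2).+1%:R)^-1 ->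
    big dY (fiber E (g x0).1 x) delta (expR (be * - ln delta)).
  move=> x /= hx; have gx : g x = g x0.
    by apply: (pcan_inj pickleK); rewrite hx hx0.
  by rewrite -gx; apply: hg.
have := core_lower mX mY (A := [set x | pickle (g x) = j]) (B := fiber E (g x0).1)
  (F := E (g x0).1) (fun x y _ h => h) m0 hj hB.
by move=> h; apply: le_trans h _; apply: ereal_sup_ubound; exists (g x0).1.
Qed.

Unset Implicit Arguments.
Theorem corollary4p5 (R : realType) (X : Type) (dX : X -> X -> R)
  (Y : Type) (dY : Y -> Y -> R) :
  is_metric dX -> is_metric dY ->
  let dXY := max_metric dX dY in
  [/\ (packing_dim dX setT + directed_lower_packing_dim dY setT
         <= packing_dim dXY setT)%E,
      (directed_lower_packing_dim dX setT + directed_lower_packing_dim dY setT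
         <= directed_lower_packing_dim dXY setT)%E
    & (lower_packing_dim dX setT + lower_packing_dim dY setT
         <= lower_packing_dim dXY setT)%E].
Proof.
move=> mX mY dXY; split; [exact: partI|exact: partII|exact: partIII].
Qed.
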